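(* Let $k\ge2$, $n\ge1$, and let $T$ be a $k$-tensor in $n$ dimensions with all entries positive that is $2$-line stochastic. Then $T$ has a unique positive fixed point, i.e., there is exactly one entrywise positive probability vector $p\in\mathbb R^n$ with $T(p,\dots,p)=p$.
   Context: A $k$-tensor in $n$ dimensions is an array $T=(T_{i,j_1,\dots,j_{k-1}})$ with all indices in $[n]$; the first index is the output index. It acts on probability vectors by $T(p_1,\dots,p_{k-1})_i=\sum_{j_1,\dots,j_{k-1}=1}^n T_{i,j_1,\dots,j_{k-1}}\,p_1(j_1)\cdots p_{k-1}(j_{k-1})$. $T$ is $2$-line stochastic if it is stochastic over the output index, i.e., $\sum_{i=1}^nT_{i,j_1,\dots,j_{k-1}}=1$ for all fixed $j_1,\dots,j_{k-1}$, and there is an input position $m\in\{1,\dots,k-1\}$ over which it is also stochastic, i.e., $\sum_{j_m=1}^nT_{i,j_1,\dots,j_{k-1}}=1$ for every fixing of $i$ and of the other input indices. A fixed point of $T$ is a probability vector $p$ (nonnegative entries summing to $1$) with $p=T(p,\dots,p)$. *)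

(* Defs.v *)
From mathcomp Require Import all_boot all_order all_algebra.
From mathcomp Require Import reals.
Set Implicit Arguments. Unset Strict Implicit. Unset Printing Implicit Defensive.
Import Order.TTheory GRing.Theory Num.Theory.
Local Open Scope ring_scope.

(* A k-tensor in n dimensions: the output index i : 'I_n and a tuple of
   k-1 input indices, represented as a finite function 'I_(k.-1) -> 'I_n. *)
Definition tensor (R : Type) (k n : nat) :=
  'I_n -> {ffun 'I_k.-1 -> 'I_n} -> R.

Definition upd_idx (k n : nat) (j : {ffun 'I_k.-1 -> 'I_n}) (m : 'I_k.-1) (a : 'I_n)
  : {ffun 'I_k.-1 -> 'I_n} := [ffun l => if l == m then a else j l].

Definition tensor_apply (R : realType) (k n : nat) (T : tensor R k n)
  (p : 'I_n -> R) (i : 'I_n) : R :=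
  \sum_(j : {ffun 'I_k.-1 -> 'I_n}) T i j * \prod_(l < k.-1) p (j l).

Definition stochastic_output (R : realType) (k n : nat) (T : tensor R k n) : Prop :=
  forall j : {ffun 'I_k.-1 -> 'I_n}, \sum_(i < n) T i j = 1.

Definition stochastic_input (R : realType) (k n : nat) (T : tensor R k n)
  (m : 'I_k.-1) : Prop :=
  forall (i : 'I_n) (j : {ffun 'I_k.-1 -> 'I_n}),
    \sum_(a < n) T i (upd_idx j m a) = 1.

Definition two_line_stochastic (R : realType) (k n : nat) (T : tensor R k n) : Prop :=
  stochastic_output T /\ exists m : 'I_k.-1, stochastic_input T m.

Definition positive_prob_vector (R : realType) (n : nat) (p : 'I_n -> R) : Prop :=
  (forall i, 0 < p i) /\ \sum_(i < n) p i = 1.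

Definition is_fixed_point (R : realType) (k n : nat) (T : tensor R k n)
  (p : 'I_n -> R) : Prop :=
  forall i, tensor_apply T p i = p i.

(* Main.v *)
Require Import Defs.
From mathcomp Require Import all_boot all_order all_algebra.
From mathcomp Require Import reals.
From Stdlib Require Import FunctionalExtensionality.
Import Order.TTheory GRing.Theory Num.Theory.
Local Open Scope ring_scope.

Section Aux.
Variables (R : realType) (k n : nat).
Implicit Types (j : {ffun 'I_k.-1 -> 'I_n}).

Lemma upd_id j m : upd_idx j m (j m) = j.
Proof. by apply/ffunP => l; rewrite ffunE; case: eqP => // ->. Qed.

Lemma upd_upd j m a b : upd_idx (upd_idx j m a) m b = upd_idx j m b.
Proof. by apply/ffunP => l; rewrite !ffunE; case: eqP. Qed.

Lemma upd_at j m a : upd_idx j m a m = a.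
Proof. by rewrite ffunE eqxx. Qed.

Lemma sum_decomp (F : {ffun 'I_k.-1 -> 'I_n} -> R) m b :
  \sum_(j : {ffun 'I_k.-1 -> 'I_n}) F j = \sum_(j : {ffun 'I_k.-1 -> 'I_n} | j m == b) \sum_a F (upd_idx j m a).
Proof.
rewrite (exchange_big_dep xpredT) //=.
rewrite (partition_big (fun j => j m) xpredT) //=.
apply: eq_bigr => a _.
rewrite (reindex_onto (fun j => upd_idx j m a) (fun j => upd_idx j m b)) /=.
  apply: eq_bigl => j; rewrite upd_at eqxx /= upd_upd.
  rewrite andbT; apply/eqP/eqP => [<-|<-]; first by rewrite upd_at.
  by rewrite upd_id.
by move=> j /eqP <-; rewrite upd_upd upd_id.
Qed.

Definition wq (q : 'I_n -> R) m j := \prod_(l < k.-1 | l != m) q (j l).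

Lemma wq_upd q m j a : wq q m (upd_idx j m a) = wq q m j.
Proof.
by apply: eq_bigr => l /negPf hl; rewrite ffunE hl.
Qed.

Lemma prod_split q m j : \prod_(l < k.-1) q (j l) = q (j m) * wq q m j.
Proof. by rewrite (bigD1 m). Qed.

Lemma sum_w (T : tensor R k n) q m i (b : 'I_n) :
  stochastic_input T m -> \sum_(a < n) q a = 1 ->
  \sum_(j : {ffun 'I_k.-1 -> 'I_n}) T i j * wq q m j = 1.
Proof.
move=> hT hq.
have h1 : \sum_(j : {ffun 'I_k.-1 -> 'I_n}) \prod_(l < k.-1) q (j l) = 1.
  rewrite -(bigA_distr_bigA (fun (_ : 'I_k.-1) (a : 'I_n) => q a)) /=.
  by rewrite (eq_bigr (fun _ => 1)) ?prodr_const ?expr1n // => l _.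
rewrite (sum_decomp _ m b); rewrite (sum_decomp _ m b) in h1.
rewrite -h1; apply: eq_bigr => j _.
rewrite (eq_bigr (fun a => T i (upd_idx j m a) * wq q m j)); last first.
  by move=> a _; rewrite wq_upd.
rewrite -mulr_suml hT mul1r.
rewrite [RHS](eq_bigr (fun a => q a * wq q m j)); last first.
  by move=> a _; rewrite (prod_split _ m) wq_upd upd_at.
by rewrite -mulr_suml hq mul1r.
Qed.

End Aux.
Arguments wq {R k n}.
Arguments sum_w {R k n}.
Arguments prod_split {R k n}.
Arguments wq_upd {R k n}.
Arguments sum_decomp {R k n}.

Section Main.
Variables (R : realType) (k n : nat).

Lemma uniq_fp (T : tensor R k n) m (i0 : 'I_n) (q : 'I_n -> R) :
  (forall i j, 0 < T i j) -> stochastic_input T m ->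
  positive_prob_vector q -> is_fixed_point T q -> forall i, q i = n%:R^-1.
Proof.
move=> Tpos hT [qpos qsum] hfix.
set i1 := [arg max_(i > i0) q i]%O.
have Hmax : forall i, q i <= q i1.
  rewrite /i1; case: (@arg_maxP _ _ _ i0 xpredT q isT) => x _ H i.
  exact: H.
have w1 := sum_w T q m i1 i0 hT qsum.
have wpos : forall j, 0 < wq q m j.
  by move=> j; apply: prodr_gt0 => l _.
have hq1 : q i1 = \sum_(j : {ffun 'I_k.-1 -> 'I_n}) T i1 j * (q (j m) * wq q m j).
  rewrite -{1}hfix /tensor_apply; apply: eq_bigr => j _; by rewrite (prod_split _ m).
have hz : \sum_(j : {ffun 'I_k.-1 -> 'I_n}) T i1 j * wq q m j * (q i1 - q (j m)) = 0.
  rewrite (eq_bigr (fun j => T i1 j * wq q m j * q i1 - T i1 j * (q (j m) * wq q m j))); last first.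
    by move=> j _; rewrite mulrBr; congr (_ - _); rewrite -!mulrA; congr (_ * _); rewrite mulrC.
  by rewrite sumrB -mulr_suml w1 mul1r -hq1 subrr.
have hnn : forall j : {ffun 'I_k.-1 -> 'I_n}, xpredT j -> 0 <= T i1 j * wq q m j * (q i1 - q (j m)).
  by move=> j' _; rewrite mulr_ge0 ?subr_ge0 // mulr_ge0 // ltW.
have H0 := psumr_eq0P hnn hz.
have hall : forall j : {ffun 'I_k.-1 -> 'I_n}, q (j m) = q i1.
  move=> j; have /eqP := H0 j isT.
  rewrite /= mulf_eq0 mulf_eq0 (gt_eqF (Tpos _ _)) (gt_eqF (wpos _)) /= subr_eq0.
  by move/eqP.
have hc : forall a, q a = q i1.
  move=> a; rewrite -(hall (upd_idx [ffun _ => i0] m a)).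
  by rewrite upd_at.
have : \sum_(i < n) q i = q i1 * n%:R.
  by rewrite (eq_bigr (fun _ => q i1)) ?sumr_const ?card_ord ?mulr_natr // => i _.
rewrite qsum => h1 i.
have nz : n%:R != 0 :> R by rewrite pnatr_eq0 -lt0n; by case: (n) (i0) => [[]|].
by rewrite hc; apply: (mulIf nz); rewrite -h1 mulVf.
Qed.

End Main.

Theorem theorem1p6 (R : realType) (k n : nat) (T : tensor R k n) :
  (2 <= k)%N -> (1 <= n)%N ->
  (forall i j, 0 < T i j) ->
  two_line_stochastic T ->
  exists p : 'I_n -> R,
    (positive_prob_vector p /\ is_fixed_point T p) /\
    forall q : 'I_n -> R, positive_prob_vector q -> is_fixed_point T q -> q = p.
Proof.
move=> hk hn Tpos [_ [m hT]].
have i0 : 'I_n by exists 0%N.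
have nz : n%:R != 0 :> R by rewrite pnatr_eq0 -lt0n.
have pp : positive_prob_vector (fun _ : 'I_n => n%:R^-1 : R).
  split; first by move=> _; rewrite invr_gt0 ltr0n.
  by rewrite sumr_const card_ord -(mulr_natr (n%:R^-1)) mulVf.
exists (fun _ => n%:R^-1); split; last first.
  by move=> q hq hf; apply: functional_extensionality => i; exact: (@uniq_fp R k n T m i0 q Tpos hT hq hf i).
split => // i; rewrite /tensor_apply.
rewrite (eq_bigr (fun j => n%:R^-1 * (T i j * wq (fun _ : 'I_n => n%:R^-1 : R) m j))).
  by rewrite -mulr_sumr (sum_w T _ m i i0 hT) ?mulr1 //; case: pp.
by move=> j _; rewrite (prod_split (fun _ : 'I_n => n%:R^-1 : R) m j) mulrCA.
Qed.
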